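(* Let $\mathbf{H}\in\mathbb{R}^{m\times n}$ have full column rank, with rows indexed by sensors $\{1,\dots,m\}$ and columns by state variables $\{1,\dots,n\}$. Let $\mathcal{S}_o\subseteq\{1,\dots,m\}$, let $\mathbf{H}_o\in\mathbb{R}^{|\mathcal{S}_o|\times n}$ be the submatrix of $\mathbf{H}$ consisting of the rows indexed by $\mathcal{S}_o$, and let $\mathcal{X}_o$ be the set of indices of the nonzero columns of $\mathbf{H}_o$. Suppose that (i) the state variables in $\mathcal{X}_o$ are observable with respect to $\mathcal{S}_o$; (ii) $\mathcal{C}\subseteq\mathcal{S}_o$ is a critical set with respect to $(\mathcal{S}_o,\mathcal{X}_o)$; (iii) the submatrix of $\mathbf{H}$ obtained by removing the rows indexed by $\mathcal{C}$ does not have full column rank. Let $\mathcal{A}_o$ be the set of vectors $\mathbf{b}\in\mathcal{R}(\mathbf{H}_o)$ whose entries corresponding to the sensors in $\mathcal{S}_o\setminus\mathcal{C}$ are all zero. Then: (1) $\mathcal{A}_o$ is a linear subspace of dimension one; (2) for any nonzero $\mathbf{a}_o\in\mathcal{A}_o$, the vector $\mathbf{a}\in\mathbb{R}^m$ defined by $a_i=(\mathbf{a}_o)_i$ (the entry of $\mathbf{a}_o$ corresponding to sensor $i$) for $i\in\mathcal{C}$ and $a_i=0$ for $i\notin\mathcal{C}$ is an unobservable attack, i.e., $\mathbf{a}\neq\mathbf{0}$ and $\mathbf{a}\in\mathcal{R}(\mathbf{H})$.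
   Context: Linearized model $\mathbf{z}=\mathbf{H}\mathbf{x}+\mathbf{e}$. For a sensor set $\mathcal{S}$ and a set of state variables $\mathcal{X}$, let $\mathbf{H}_{\mathcal{S}}$ be the submatrix of $\mathbf{H}$ keeping only rows in $\mathcal{S}$; the variables in $\mathcal{X}$ are observable with respect to $\mathcal{S}$ if every vector in $\mathcal{N}(\mathbf{H}_{\mathcal{S}})$ has zero entries at all coordinates in $\mathcal{X}$. If the variables in $\mathcal{X}$ are observable with respect to $\mathcal{S}$, a subset $\mathcal{C}\subseteq\mathcal{S}$ is a critical set with respect to $(\mathcal{S},\mathcal{X})$ if the variables in $\mathcal{X}$ are not observable with respect to $\mathcal{S}\setminus\mathcal{C}$, while they remain observable with respect to $\mathcal{S}\setminus\mathcal{C}'$ for every strict subset $\mathcal{C}'\subsetneq\mathcal{C}$. An attack adding $\mathbf{a}$ to the data is unobservable iff $\mathbf{a}\ne\mathbf{0}$ and $\mathbf{a}\in\mathcal{R}(\mathbf{H})$ (then $\mathbf{z}+\mathbf{a}=\mathbf{H}\bar{\mathbf{x}}+\mathbf{e}$ for some $\bar{\mathbf{x}}\neq\mathbf{x}$). *)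

(* Defs.v *)
From HB Require Import structures.
From mathcomp Require Import all_boot all_order all_algebra.
Set Implicit Arguments. Unset Strict Implicit. Unset Printing Implicit Defensive.
Import Order.TTheory GRing.Theory Num.Theory.
Local Open Scope ring_scope.

Definition subrows (R : Type) (m n : nat) (S : {set 'I_m}) (H : 'M[R]_(m, n))
  : 'M[R]_(#|S|, n) := rowsub (fun k : 'I_#|S| => enum_val k) H.

Definition observable (R : fieldType) (m n : nat) (H : 'M[R]_(m, n))
  (S : {set 'I_m}) (X : {set 'I_n}) : Prop :=
  forall x : 'cV[R]_n, subrows S H *m x = 0 -> forall j, j \in X -> x j 0 = 0.

Definition critical_set (R : fieldType) (m n : nat) (H : 'M[R]_(m, n))
  (S : {set 'I_m}) (X : {set 'I_n}) (C : {set 'I_m}) : Prop :=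
  [/\ C \subset S, observable H S X,
      ~ observable H (S :\: C) X
    & forall C' : {set 'I_m}, C' \proper C -> observable H (S :\: C') X].

Definition in_range (R : fieldType) (m n : nat) (H : 'M[R]_(m, n))
  (b : 'cV[R]_m) : Prop := exists x : 'cV[R]_n, b = H *m x.

Definition unobservable_attack (R : fieldType) (m n : nat) (H : 'M[R]_(m, n))
  (a : 'cV[R]_m) : Prop := a != 0 /\ in_range H a.

Definition nonzero_cols (R : fieldType) (p n : nat) (M : 'M[R]_(p, n))
  : {set 'I_n} := [set j | col j M != 0].

Definition A_o (R : fieldType) (m n : nat) (H : 'M[R]_(m, n))
  (So C : {set 'I_m}) (b : 'cV[R]_#|So|) : Prop :=
  in_range (subrows So H) b /\
  forall k : 'I_#|So|, enum_val k \notin C -> b k 0 = 0.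
Arguments A_o {R m n} H So C b.

(* Main.v *)
Require Import Defs.
From HB Require Import structures.
From mathcomp Require Import all_boot all_order all_algebra.
From Stdlib Require Import Classical.
Import Order.TTheory GRing.Theory Num.Theory.
Local Open Scope ring_scope.

Section Aux.
Variable R : fieldType.

Lemma subrowsE m n (S : {set 'I_m}) (M : 'M[R]_(m, n)) k j :
  subrows S M k j = M (enum_val k) j.
Proof. by rewrite /subrows mxE. Qed.

Lemma subrows_mul m n p (S : {set 'I_m}) (H : 'M[R]_(m, n)) (x : 'M[R]_(n, p)) :
  subrows S H *m x = subrows S (H *m x).
Proof. by rewrite /subrows mul_rowsub_mx. Qed.

Lemma subrows0P m (S : {set 'I_m}) (M : 'cV[R]_m) :
  subrows S M = 0 <-> forall i, i \in S -> M i 0 = 0.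
Proof.
split.
  move=> /matrixP h i iS; have := h (enum_rank_in iS i) 0.
  by rewrite subrowsE enum_rankK_in // mxE.
move=> h; apply/matrixP => k j; rewrite ord1 subrowsE mxE; apply: h.
exact: enum_valP.
Qed.

Lemma cV_neq0 p (v : 'cV[R]_p) : v != 0 -> exists k, v k 0 != 0.
Proof.
move=> nz; case: (pickP (fun k => v k 0 != 0)) => [k hk|h]; first by exists k.
move/eqP: nz; case; apply/matrixP => k j; rewrite ord1 mxE; apply/eqP.
by have := h k => /negbFE.
Qed.

Lemma ker_exists p n (A : 'M[R]_(p, n)) : (\rank A < n)%N ->
  exists x : 'cV[R]_n, x != 0 /\ A *m x = 0.
Proof.
move=> hr.
have : kermx A^T != 0.
  by rewrite kermx_eq0 /row_free mxrank_tr; rewrite neq_ltn hr.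
case/rowV0Pn => v /sub_kermxP hv nz; exists v^T; split.
  by rewrite -(inj_eq (@trmx_inj _ _ _)) trmxK trmx0.
by rewrite -[A]trmxK -trmx_mul hv trmx0.
Qed.

Lemma fullrank_inj m n (H : 'M[R]_(m, n)) (x : 'cV[R]_n) :
  \rank H = n -> H *m x = 0 -> x = 0.
Proof.
move=> hr hx; have : row_full H by rewrite /row_full hr.
case/row_fullP => B hB.
by rewrite -[x]mul1mx -hB -mulmxA hx mulmx0.
Qed.

Lemma subE p q (M N : 'M[R]_(p, q)) i j : (M - N) i j = M i j - N i j.
Proof. by rewrite !mxE. Qed.
Lemma sclE p q c (M : 'M[R]_(p, q)) i j : (c *: M) i j = c * M i j.
Proof. by rewrite !mxE. Qed.

End Aux.

Theorem theorem3 (R : realFieldType) (m n : nat) (H : 'M[R]_(m, n))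
  (So C : {set 'I_m}) :
  \rank H = n ->
  observable H So (nonzero_cols (subrows So H)) ->
  critical_set H So (nonzero_cols (subrows So H)) C ->
  (\rank (subrows (~: C) H) < n)%N ->
  (* (1) A_o is a linear subspace of dimension one *)
  (exists v : 'cV[R]_#|So|, v != 0 /\
     forall b : 'cV[R]_#|So|, A_o H So C b <-> exists c : R, b = c *: v) /\
  (* (2) zero-padding of any nonzero a_o in A_o is an unobservable attack *)
  (forall a_o : 'cV[R]_#|So|, A_o H So C a_o -> a_o != 0 ->
   forall a : 'cV[R]_m,
     (forall i, i \notin C -> a i 0 = 0) ->
     (forall k : 'I_#|So|, enum_val k \in C -> a (enum_val k) 0 = a_o k 0) ->
     unobservable_attack H a).
Proof.
set Xo := nonzero_cols _ => hrank hobs [CS _ hnobs hmin] hrC.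
have [x0 [hx0 [j0 [j0X x0j]]]] : exists x0 : 'cV[R]_n,
    subrows (So :\: C) H *m x0 = 0 /\ exists j, j \in Xo /\ x0 j 0 <> 0.
  apply: NNPP => hne; apply: hnobs => x hx j jX.
  apply: NNPP => hxj; apply: hne; exists x; split => //; by exists j.
set Ho := subrows So H.
have HoP : forall y, Ho *m y = subrows So (H *m y) by move=> y; exact: subrows_mul.
have Hx0 : forall i, i \in So :\: C -> (H *m x0) i 0 = 0.
  by apply/subrows0P; rewrite -subrows_mul.
set v := Ho *m x0.
have vnz : v != 0.
  apply/eqP => hv; apply: x0j; exact: (hobs x0 hv j0 j0X).
have vC : forall k, enum_val k \notin C -> v k 0 = 0.
  move=> k kC; rewrite /v HoP subrowsE; apply: Hx0.
  by rewrite inE kC enum_valP.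
have [k0 vk0] : exists k, v k 0 != 0 by exact: cV_neq0.
have k0C : enum_val k0 \in C by apply: contraR vk0 => /vC ->.
have HoX : forall z : 'cV[R]_n, (forall j, j \in Xo -> z j 0 = 0) -> Ho *m z = 0.
  move=> z hz; apply/matrixP => k j; rewrite ord1 !mxE; apply: big1 => l _.
  case: (boolP (l \in Xo)) => lX; first by rewrite hz // mulr0.
  move: lX; rewrite inE negbK => /eqP /matrixP /(_ k 0).
  by rewrite !mxE => ->; rewrite mul0r.
have part1 : forall b : 'cV[R]_#|So|, A_o H So C b <-> exists c : R, b = c *: v.
  move=> b; split.
    case=> [[y ->]] hb.
    set t := (Ho *m y) k0 0 / v k0 0.
    exists t.
    have : Ho *m (y - t *: x0) = 0.
      apply: HoX => j jX; apply: (hmin (C :\ enum_val k0)) (properD1 k0C) _ _ j jX.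
      rewrite subrows_mul; apply/subrows0P => i.
      rewrite !inE negb_and negbK => /andP [hi iS].
      rewrite mulmxBr -scalemxAr subE sclE.
      have hHy : forall i', i' \in So -> i' \notin C -> (H *m y) i' 0 = 0.
        move=> i' i'S i'C; have := hb (enum_rank_in i'S i').
        rewrite subrows_mul subrowsE enum_rankK_in //; exact.
      case/orP: hi => [/eqP -> | iC].
        have := erefl (Ho *m y); rewrite {2}HoP => /matrixP /(_ k0 0).
        rewrite subrowsE => <-.
        have := erefl v; rewrite {2}/v HoP => /matrixP /(_ k0 0).
        rewrite subrowsE => <-.
        by rewrite /t mulfVK // subrr.
      by rewrite hHy // Hx0 ?mulr0 ?subr0 // inE iC iS.
    by rewrite mulmxBr -scalemxAr => /eqP; rewrite subr_eq0 => /eqP.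
  case=> c ->; split.
    by exists (c *: x0); rewrite /v scalemxAr.
  by move=> k kC; rewrite mxE vC // mulr0.
split; first by exists v.
move=> a_o hao aonz a ha1 ha2.
have [x1 [x1nz hx1]] := @ker_exists R _ _ _ hrC.
rewrite subrows_mul in hx1; move/subrows0P: hx1 => hx1.
have Hx1nz : H *m x1 != 0.
  by apply: contra x1nz => /eqP /(@fullrank_inj R _ _ _ _ hrank) ->.
have [i1 hi1] := @cV_neq0 R _ _ Hx1nz.
have i1C : i1 \in C by apply: contraR hi1 => iC; rewrite hx1 // inE.
have i1S : i1 \in So by move/subsetP: CS; apply.
set w := Ho *m x1.
have wA : A_o H So C w.
  split; first by exists x1.
  by move=> k kC; rewrite /w HoP subrowsE; apply: hx1; rewrite inE.
have wnz : w != 0.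
  apply/eqP => /matrixP /(_ (enum_rank_in i1S i1) 0).
  rewrite /w HoP subrowsE enum_rankK_in // [RHS]mxE => h; by rewrite h eqxx in hi1.
have [d wd] := (part1 w).1 wA.
have [e aoe] := (part1 a_o).1 hao.
have dnz : d != 0 by apply: contra wnz => /eqP d0; rewrite wd d0 scale0r.
have aow : a_o = (e / d) *: w by rewrite wd scalerA mulfVK.
split.
  have [k hk] := @cV_neq0 R _ _ aonz.
  have kC : enum_val k \in C by apply: contraR hk => kC; rewrite hao.2.
  by apply/eqP => /matrixP /(_ (enum_val k) 0); rewrite ha2 // mxE => h; rewrite h eqxx in hk.
exists ((e / d) *: x1); apply/matrixP => i j; rewrite ord1 -scalemxAr mxE.
case: (boolP (i \in C)) => iC.
  have iS : i \in So by move/subsetP: CS; apply.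
  rewrite -(enum_rankK_in iS iS) ha2 ?enum_rankK_in // aow mxE.
  by rewrite /w HoP subrowsE enum_rankK_in.
by rewrite ha1 // hx1 ?mulr0 // inE.
Qed.
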